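(* Let $X$ be a transitive subshift whose language $\mathcal L$ has eventually constant growth with rate $K$, and let $x\in X$. Then either $\mathcal L$ is periodic, or there is $N$ such that for all $n\ge N$, all $j\in\mathbb N$ and both $\mathfrak s=\ell$ and $\mathfrak s=r$, the word $x_{[j,j+(K+2)n-2]}$ contains some $\mathfrak s$-special word $w\in\mathcal L_n$ as a subword.
   Context: A subshift is a nonempty closed $X\subseteq\mathcal A^{\mathbb N}$ ($\mathcal A$ finite) with $SX=X$ for the left shift $(Sx)_i=x_{i+1}$; transitive means for all nonempty open $U,V\subseteq X$ some $S^n(U)\cap V\ne\emptyset$. $\mathcal L$ is the set of finite nonempty words occurring in points of $X$, $\mathcal L_n$ those of length $n$, $p(n)=|\mathcal L_n|$, and $x_{[i,j]}=x_i\cdots x_j$. Eventually constant growth with rate $K$: there are $N_0,C$ with $p(n)=Kn+C$ for all $n\ge N_0$. Periodic: there is $P$ with $w_i=w_{i+P}$ for all $w\in\mathcal L$, $1\le i\le |w|-P$. $w$ is $\ell$-special if $|\{a:aw\in\mathcal L\}|\ge 2$, $r$-special if $|\{b:wb\in\mathcal L\}|\ge2$. *)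

(* Defs.v *)
From Stdlib Require Import ClassicalEpsilon.
From mathcomp Require Import all_boot all_order all_algebra.
Set Implicit Arguments. Unset Strict Implicit. Unset Printing Implicit Defensive.

Definition pbool (P : Prop) : bool :=
  if excluded_middle_informative P then true else false.

Section Subshift.
Variable A : finType.

Definition pt := nat -> A.

Definition shift (x : pt) : pt := fun i => x i.+1.

(* x_{[i, i+n-1]} : the word of length n starting at position i *)
Definition subword (x : pt) (i n : nat) : seq A := [seq x (i + k) | k <- iota 0 n].

(* closedness in the product topology *)
Definition closedS (X : pt -> Prop) : Prop :=
  forall x : pt, (forall m, exists y, X y /\ forall k, k < m -> y k = x k) -> X x.

Definition subshift (X : pt -> Prop) : Prop :=
  [/\ exists x, X x,
      closedS X,
      (forall x, X x -> X (shift x)) &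
      (forall y, X y -> exists x, X x /\ shift x = y)].

(* U is an open subset of X in the relative (product) topology *)
Definition openIn (X U : pt -> Prop) : Prop :=
  (forall x, U x -> X x) /\
  (forall x, U x -> exists m, forall y, X y -> (forall k, k < m -> y k = x k) -> U y).

Definition transitiveS (X : pt -> Prop) : Prop :=
  forall U V : pt -> Prop, openIn X U -> openIn X V ->
    (exists u, U u) -> (exists v, V v) ->
    exists n : nat, exists u, U u /\ V (iter n shift u).

Definition inL (X : pt -> Prop) (w : seq A) : Prop :=
  w <> [::] /\ exists x, X x /\ exists i, w = subword x i (size w).

Definition complexity (X : pt -> Prop) (n : nat) : nat :=
  #|[set t : n.-tuple A | pbool (inL X (tval t))]|.

Definition ecg (X : pt -> Prop) (K : nat) : Prop :=
  exists (N0 : nat) (C : int), forall n, N0 <= n ->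
    ((complexity X n)%:Z = (K * n)%:Z + C)%R.

(* periodic language (period P >= 1); indices 0-based *)
Definition periodicL (X : pt -> Prop) : Prop :=
  exists P : nat, 0 < P /\
    forall (w : seq A) (x0 : A), inL X w -> forall i, i + P < size w ->
      nth x0 w i = nth x0 w (i + P).

Definition lspecial (X : pt -> Prop) (w : seq A) : Prop :=
  exists a b : A, a <> b /\ inL X (a :: w) /\ inL X (b :: w).

Definition rspecial (X : pt -> Prop) (w : seq A) : Prop :=
  exists a b : A, a <> b /\ inL X (rcons w a) /\ inL X (rcons w b).

End Subshift.

(* Main.v *)
Require Import Defs.
From mathcomp Require Import all_boot all_order all_algebra.
From mathcomp Require Import zify.
From Stdlib Require Import Classical ClassicalEpsilon.
Set Implicit Arguments. Unset Strict Implicit. Unset Printing Implicit Defensive.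

Section Basics.
Variable A : finType.
Implicit Types (X : pt A -> Prop) (z y : pt A).

Definition agree (y : pt A) (i : nat) (z : pt A) (k l : nat) :=
  forall t, t < l -> y (i + t) = z (k + t).

Lemma size_subword z i l : size (subword z i l) = l.
Proof. by rewrite /subword size_map size_iota. Qed.

Lemma size_subword_eq z i l : size (subword z i l) == l.
Proof. by rewrite size_subword. Qed.

Lemma nth_subword x0 z i l t : t < l -> nth x0 (subword z i l) t = z (i + t).
Proof. by move=> ht; rewrite /subword (nth_map 0) ?size_iota // nth_iota. Qed.

Lemma agree_subword y i z k l : agree y i z k l -> subword y i l = subword z k l.
Proof.
move=> H; apply: (@eq_from_nth _ (y 0)); rewrite ?size_subword // => t ht.
by rewrite !nth_subword // H.
Qed.

Lemma subword_agree y i z k l : subword y i l = subword z k l -> agree y i z k l.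
Proof.
move=> H t ht; have := congr1 (fun s => nth (y 0) s t) H.
by rewrite /= !nth_subword.
Qed.

Lemma subword_rcons z i l : subword z i l.+1 = rcons (subword z i l) (z (i + l)).
Proof.
apply: (@eq_from_nth _ (z 0)); rewrite ?size_rcons ?size_subword // => t ht.
rewrite nth_subword // nth_rcons size_subword.
case: ltngtP => h; [by rewrite nth_subword | lia | by rewrite h].
Qed.

Lemma subword_cons z i l : subword z i l.+1 = z i :: subword z (i + 1) l.
Proof.
apply: (@eq_from_nth _ (z 0)); first by rewrite size_subword /= size_subword.
rewrite size_subword => t ht.
rewrite nth_subword //; case: t ht => [|t] ht /=; first by rewrite addn0.
by rewrite nth_subword // -addnA add1n addnS.
Qed.

Lemma subword_cat z j p q : subword z j (p + q) = subword z j p ++ subword z (j + p) q.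
Proof.
rewrite /subword iotaD map_cat; congr (_ ++ _).
have -> : iota (0 + p) q = map (addn p) (iota 0 q) by rewrite -iotaDl addn0 add0n.
by rewrite -map_comp; apply: eq_map => k /=; rewrite addnA.
Qed.

Lemma infix_subword z j i l mm : i + l <= mm ->
  infix (subword z (j + i) l) (subword z j mm).
Proof.
move=> h; have -> : mm = i + (l + (mm - i - l)) by lia.
by rewrite subword_cat subword_cat infix_infix.
Qed.

Lemma iter_shift t z s : iter t (@shift A) z s = z (t + s).
Proof. by elim: t s => [|t IH] s //=; rewrite /shift IH addnS addSn. Qed.

Lemma pboolE (P : Prop) : pbool P = true <-> P.
Proof. by rewrite /pbool; case: excluded_middle_informative. Qed.

Lemma inL_subword X z i l : X z -> 0 < l -> inL X (subword z i l).
Proof.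
move=> Xz hl; split.
  by move=> h; have := congr1 size h; rewrite size_subword /=; lia.
by exists z; split => //; exists i; rewrite size_subword.
Qed.

Lemma inL_elim X w : inL X w -> exists z i, X z /\ w = subword z i (size w).
Proof. by case=> _ [z [Xz [i ->]]]; exists z, i; rewrite size_subword. Qed.

End Basics.

Section Key.
Variable A : finType.
Variable X : pt A -> Prop.
Hypothesis HX : subshift X.
Hypothesis HT : transitiveS X.
Variable x : pt A.
Hypothesis Xx : X x.
Variables j n m a P : nat.
Hypothesis Hn : 0 < n.
Hypothesis HP : 0 < P.
Hypothesis Hrep : forall s, s < n -> x (j + a + s + P) = x (j + a + s).
Hypothesis Hb : a + P + n <= m.

Definition c (k : nat) : A := x (j + a + k %% P).

Lemma c_per k : c (k + P) = c k.
Proof. by rewrite /c modnDr. Qed.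

Lemma c_bump q y i k l : agree y i c k l -> agree y i c (k + q * P) l.
Proof.
move=> H t ht; rewrite H // /c; congr (x (_ + _)).
by rewrite addnAC [in RHS]addnC modnMDl.
Qed.

Lemma e_mod u : u < P + n -> x (j + a + u %% P) = x (j + a + u).
Proof.
elim: u {-2}u (leqnn u) => [|N IH] u hu hP.
  by move: hu; rewrite leqn0 => /eqP ->; rewrite mod0n.
case: (ltnP u P) => hup; first by rewrite modn_small.
have -> : u = (u - P) + P by lia.
rewrite modnDr IH; [|lia|lia].
rewrite addnA Hrep //; lia.
Qed.

Lemma C1 k : agree c k x (j + a + k %% P) n.+1.
Proof.
move=> t ht; rewrite /c -modnDml e_mod; last first.
  have := ltn_pmod k HP; lia.
by rewrite addnA.
Qed.

Lemma X_iter t z : X z -> X (iter t (@shift A) z).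
Proof. case: HX => _ _ Hs _; by elim: t => //= t IH Xz; apply: Hs; apply: IH. Qed.

Lemma conn y1 i1 y2 i2 : X y1 -> X y2 ->
  exists t u, [/\ X u, agree u 0 y1 i1 n & agree u t y2 i2 n].
Proof.
move=> X1 X2.
have op : forall y i, openIn X (fun z => X z /\ agree z 0 y i n).
  move=> y i; split=> [z [] //|z [Xz Hz]]; exists n => y' Xy' Hy'; split=> // t ht.
  by rewrite -Hz // add0n Hy'.
have ne : forall y i, X y -> exists z, X z /\ agree z 0 y i n.
  move=> y i Xy; exists (iter i (@shift A) y); split; first exact: X_iter.
  by move=> t _; rewrite iter_shift add0n.
have [t [u [[Xu H1] [_ H2]]]] := HT (op y1 i1) (op y2 i2) (ne _ _ X1) (ne _ _ X2).
exists t, u; split=> // s hs; rewrite -H2 // iter_shift add0n //.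
Qed.

Section R.
Hypothesis Hr : forall w, inL X w -> size w = n ->
  infix w (subword x j m) -> ~ rspecial X w.

Lemma H1r z i k : X z -> agree z i c k n -> z (i + n) = c (k + n).
Proof.
move=> Xz H; set r := k %% P.
have hr : r < P by exact: ltn_pmod.
have Hc := C1 k.
have Hw : subword z i n = subword x (j + a + r) n.
  apply: agree_subword => t ht; rewrite H // Hc //; lia.
apply: NNPP => hne.
apply: (Hr (w := subword x (j + a + r) n)).
- exact: inL_subword.
- exact: size_subword.
- rewrite -addnA; apply: infix_subword; lia.
exists (z (i + n)), (x (j + a + r + n)); split; [|split].
- by rewrite -(Hc n).
- by rewrite -Hw -subword_rcons; apply: inL_subword.
- by rewrite -subword_rcons; apply: inL_subword.
Qed.

Lemma Fr l z i k : X z -> agree z i c k n -> agree z i c k l.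
Proof.
move=> Xz H; elim: l => [|l IH] t ht; first by [].
case: (ltnP t l) => htl; first exact: IH.
have -> : t = l by lia.
case: (ltnP l n) => hln; first exact: H.
have := @H1r z (i + (l - n)) (k + (l - n)) Xz.
rewrite -!addnA subnK //; apply=> s hs.
by rewrite -!addnA; apply: IH; lia.
Qed.

Lemma key_r : periodicL X.
Proof.
exists P; split=> // w x0 Hw s hs.
have [z [i [Xz Ew]]] := inL_elim Hw.
have [t [u [Xu H1 H2]]] := conn (j + a) i Xx Xz.
have Hu : agree u 0 c 0 n.
  move=> s' hs'; have := @C1 0 s'; rewrite mod0n addn0 => ->; [by rewrite H1 | lia].
have Hu' := Fr (l := t + n) Xu Hu.
have Hz : agree z i c t n.
  move=> s' hs'; rewrite -H2 // -[t + s']add0n Hu' //; lia.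
have Hz' := Fr (l := size w) Xz Hz.
rewrite Ew !nth_subword ?size_subword; [|lia|lia].
rewrite !Hz' ?size_subword; [|lia|lia].
by rewrite addnA c_per.
Qed.
End R.

Section L.
Hypothesis Hl : forall w, inL X w -> size w = n ->
  infix w (subword x j m) -> ~ lspecial X w.

Lemma H1l z i k : X z -> agree z (i + 1) c (k + 1) n -> z i = c k.
Proof.
move=> Xz H; set r := k %% P.
have hr : r < P by exact: ltn_pmod.
have Hc := C1 k.
have Hw : subword z (i + 1) n = subword x (j + a + r + 1) n.
  apply: agree_subword => t ht; rewrite H // -addnA Hc; last lia.
  by rewrite addnA.
apply: NNPP => hne.
apply: (Hl (w := subword x (j + a + r + 1) n)).
- exact: inL_subword.
- exact: size_subword.
- rewrite -!addnA; apply: infix_subword; lia.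
exists (z i), (x (j + a + r)); split; [|split].
- by have := Hc 0 isT; rewrite !addn0 => <-.
- by rewrite -Hw -subword_cons; apply: inL_subword.
- by rewrite -subword_cons; apply: inL_subword.
Qed.

Lemma Fl l z i k : X z -> agree z (i + l) c (k + l) n -> agree z i c k (l + n).
Proof.
move=> Xz; elim: l i k => [|l IH] i k; first by rewrite !addn0 add0n.
move=> H.
have H' : agree z (i + 1) c (k + 1) (l + n).
  by apply: IH; rewrite -!addnA !add1n.
have h0 : z i = c k.
  apply: (H1l Xz) => t ht; apply: H'; lia.
move=> [|t] ht; first by rewrite !addn0.
have := H' t; rewrite -!addnA !add1n !addnS => -> //; lia.
Qed.

Lemma Gl z i : X z -> exists k, agree z i c k n.
Proof.
move=> Xz.
have [t [u [Xu H1 H2]]] := conn i (j + a) Xz Xx.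
have Hu : agree u t c (t * P) n.
  have : agree u t c 0 n.
    move=> s hs; have := @C1 0 s; rewrite mod0n addn0 => ->; [by rewrite H2 | lia].
  by move/(@c_bump t _ _ _ _); rewrite add0n.
have ht : t <= t * P by rewrite leq_pmulr.
have := @Fl t u 0 (t * P - t) Xu; rewrite add0n subnK // => /(_ Hu) Hu'.
exists (t * P - t) => s hs; rewrite -[i + s](add0n) -H1 // Hu' //; lia.
Qed.

Lemma key_l : periodicL X.
Proof.
exists P; split=> // w x0 Hw s hs.
have [z [i [Xz Ew]]] := inL_elim Hw.
have [k Hk] := @Gl z (i + size w) Xz.
have Hk' := @c_bump (size w) _ _ _ _ Hk.
have hle : size w <= k + size w * P by have := leq_pmulr (size w) HP; lia.
have := @Fl (size w) z i (k + size w * P - size w) Xz; rewrite subnK // => /(_ Hk') Hz.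
rewrite Ew !nth_subword ?size_subword; [|lia|lia].
rewrite !Hz; [|lia|lia].
by rewrite addnA c_per.
Qed.
End L.
End Key.

Lemma pigeon (A : finType) (X : pt A -> Prop) (x : pt A) j n M :
  X x -> 0 < n -> #|[set t : n.-tuple A | pbool (inL X (tval t))]| < M ->
  exists a P, [/\ 0 < P, a + P < M &
    forall s, s < n -> x (j + a + s + P) = x (j + a + s)].
Proof.
move=> Xx Hn Hc.
pose f := fun i : 'I_M => Tuple (size_subword_eq x (j + i) n).
case: (boolP (injectiveb f)) => [/injectiveP inj | /injectivePn [i1 [i2 ne Eq]]].
  have : #|f @: [set: 'I_M]| <= #|[set t : n.-tuple A | pbool (inL X (tval t))]|.
    apply: subset_leq_card; apply/subsetP => _ /imsetP [i _ ->].
    by rewrite inE; apply/pboolE; apply: inL_subword.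
  rewrite card_imset // cardsT card_ord; lia.
have E : subword x (j + i1) n = subword x (j + i2) n by exact: (congr1 val Eq).
have Ag := subword_agree E.
have h1 := ltn_ord i1; have h2 := ltn_ord i2.
case: (ltngtP i1 i2) => h.
- exists i1, (i2 - i1); split; [lia | lia |] => s hs.
  rewrite Ag //; congr x; lia.
- exists i2, (i1 - i2); split; [lia | lia |] => s hs.
  rewrite -Ag //; congr x; lia.
- by move: ne; rewrite (val_inj h) eqxx.
Qed.

Theorem mainTheorem8 (A : finType) (X : pt A -> Prop) (K : nat) (x : pt A) :
  subshift X -> transitiveS X -> ecg X K -> X x ->
  periodicL X \/
  exists N : nat, forall n : nat, N <= n -> forall j : nat,
    (exists w : seq A, [/\ inL X w, size w = n, lspecial X w &
        infix w (subword x j ((K + 2) * n - 1))]) /\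
    (exists w : seq A, [/\ inL X w, size w = n, rspecial X w &
        infix w (subword x j ((K + 2) * n - 1))]).
Proof.
move=> HX HT [N0 [C HC]] Xx.
case: (classic (periodicL X)) => [Hp|nP]; [by left|right].
exists (N0 + (absz C).+1) => n hn j.
have Hn : 0 < n by lia.
have hcard : complexity X n < (K + 1) * n.
  have := HC n ltac:(lia); rewrite /complexity.
  move: hn; clear HC; case: C => c /= hn; lia.
have [a [P [HP haP Hrep]]] := pigeon j Xx Hn hcard.
have Hb : a + P + n <= (K + 2) * n - 1 by lia.
split.
- apply: NNPP => nok; apply: nP.
  apply: (key_l HX HT Xx Hn HP Hrep Hb) => w Hw Hs Hi Hsp.
  by apply: nok; exists w; split.
- apply: NNPP => nok; apply: nP.
  apply: (key_r HX HT Xx Hn HP Hrep Hb) => w Hw Hs Hi Hsp.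
  by apply: nok; exists w; split.
Qed.
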